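(* Let $\Pi_q$ be a projective plane (not necessarily Desarguesian) of order $q$, let $\mu\ge 2$ be an integer and let $\delta=1/\sqrt{(q+1)\ln(q+1)}$. (i) Define $D_1=1$ and $D_i=D_{i-1}+1+\frac{D_{i-1}+\delta}{q}+\delta$ for $i=2,3,\dots,\mu$. Then $\Pi_q$ contains a $(1,\mu)$-saturating set of size $k\le 2D_\mu\sqrt{(q+1)\ln(q+1)}+2$. (ii) If $\mu\le\sqrt{q}$, then $\Pi_q$ contains a $(1,\mu)$-saturating set of size $k\le 2(\mu+1)\sqrt{(q+1)\ln(q+1)}+2$. (iii) If $\mu\le \frac{(1-\delta)q-\delta+1}{2}+1$, then $\Pi_q$ contains a $(1,\mu)$-saturating set of size $k\le 2(2\mu-1)\sqrt{(q+1)\ln(q+1)}+2$.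
   Context: A point set $S\subset\Pi_q$ is $(1,\mu)$-saturating if for every point $Q\in\Pi_q\setminus S$ the number of secants of $S$ through $Q$, counted with multiplicity, is at least $\mu$, where a line $\ell$ meeting $S$ in at least two points is a secant and has multiplicity $\binom{\#(\ell\cap S)}{2}$. Here $\ln$ is the natural logarithm. *)

(* Defs.v *)
From Stdlib Require Import Reals.
From mathcomp Require Import all_boot.
Set Implicit Arguments.
Unset Strict Implicit.
Unset Printing Implicit Defensive.

Section Plane.
Variables (P L : finType) (inc : P -> L -> bool).

Definition collinear (x y z : P) : bool :=
  [exists l : L, [&& inc x l, inc y l & inc z l]].

Record projective_plane (q : nat) : Prop := {
  pp_line_size : forall l : L, #|[set x | inc x l]| = q.+1;
  pp_point_deg : forall x : P, #|[set l | inc x l]| = q.+1;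
  pp_two_points : forall x y : P, x != y -> exists! l : L, inc x l && inc y l;
  pp_two_lines : forall l m : L, l != m -> exists! x : P, inc x l && inc x m;
  pp_nondeg : exists a b c d : P,
    [/\ uniq [:: a; b; c; d],
        ~~ collinear a b c, ~~ collinear a b d,
        ~~ collinear a c d & ~~ collinear b c d]
}.

Definition line_pts (S : {set P}) (l : L) : nat := #|[set x in S | inc x l]|.

(* number of secants of S through Q, counted with multiplicity C(#(l cap S),2) *)
Definition secant_count (S : {set P}) (Q : P) : nat :=
  (\sum_(l : L | inc Q l && (2 <= line_pts S l)) 'C(line_pts S l, 2))%N.

Definition saturating (mu : nat) (S : {set P}) : Prop :=
  forall Q : P, Q \notin S -> mu <= secant_count S Q.
End Plane.

Open Scope R_scope.

Definition delta (q : nat) : R := 1 / sqrt ((INR q + 1) * ln (INR q + 1)).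

(* Dseq q i = D_i for i >= 1 (D_0 is an unused dummy value). *)
Fixpoint Dseq (q : nat) (i : nat) : R :=
  match i with
  | O => 1
  | S O => 1
  | S j => Dseq q j + 1 + (Dseq q j + delta q) / INR q + delta q
  end.

(* Main.v *)
Require Import Defs.
From Stdlib Require Import Reals.
From mathcomp Require Import all_boot zify.
From Stdlib Require Import Lia Lra Psatz.
Set Implicit Arguments.
Unset Strict Implicit.
Unset Printing Implicit Defensive.




Lemma ln_le' x y : 0 < x -> x <= y -> ln x <= ln y.
Proof.
move=> hx /Rle_lt_or_eq_dec [h|->]; last exact: Rle_refl.
by apply: Rlt_le; apply: ln_increasing.
Qed.

Lemma L_ge1 (q : nat) : (2 <= q)%nat -> 1 <= ln (INR q + 1).
Proof.
move=> h. rewrite -{1}(ln_exp 1). apply: ln_le'; first exact: exp_pos.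
have := exp_le_3. have : 2 <= INR q by (replace 2 with (INR 2) by (simpl; lra); apply/le_INR/leP).
lra.
Qed.

Lemma ln_le_lin y : 0 < y -> ln y <= y - 1.
Proof. move=> hy; have := exp_ineq1_le (ln y); rewrite exp_ln //; lra. Qed.

Lemma key_ineq (q mu L s : R) : 3 <= q -> 2 <= mu -> 1 <= L -> 1 <= s ->
  s <= (q + 1) * L ->
  (q * q + q + 1) * (2 * L + mu / 2 - 1) < 2 * (q * q - 1) * mu * L - (q - 3) * s.
Proof.
move=> hq hm hL hs hs2.
have h1 : (q - 3) * s <= (q - 3) * ((q + 1) * L) by apply: Rmult_le_compat_l; lra.
have hm0 : 0 <= mu - 2 by lra.
have hq2 : 0 <= q * q - 3 by nra.
have h2 : 0 <= (q * q - 3) * (L - 1) by apply: Rmult_le_pos; lra.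
have hq3 : 0 <= 2 * (mu - 2) * (q * q - 1) by apply: Rmult_le_pos; nra.
have h3 : 0 <= 2 * (mu - 2) * (q * q - 1) * (L - 1) by apply: Rmult_le_pos; lra.
have hq4 : 0 <= 2 * (q * q - 1) - (q * q + q + 1) / 2 by nra.
have h4 : 0 <= (mu - 2) * (2 * (q * q - 1) - (q * q + q + 1) / 2) by apply: Rmult_le_pos.
nra.
Qed.

Lemma f_mono (c x K : R) : 0 <= c -> 1 <= x -> x <= K ->
  x + c * x * (x - 1) / 2 <= K + c * K * (K - 1) / 2.
Proof.
move=> hc hx hK.
have h : 0 <= (K - x) * (1 + c * (K + x - 1) / 2).
  apply: Rmult_le_pos; first lra.
  have : 0 <= c * (K + x - 1) by apply: Rmult_le_pos; lra.
  lra.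
have e : K + c * K * (K - 1) / 2 - (x + c * x * (x - 1) / 2) =
   (K - x) * (1 + c * (K + x - 1) / 2) by field.
lra.
Qed.

Lemma fx_eq (q mu L s : R) : s * s = (q + 1) * L ->
  (2 * mu * s) + (q - 1) * (2 * mu * s) * (2 * mu * s - 1) / 2 =
  mu * (2 * (q * q - 1) * mu * L - (q - 3) * s).
Proof.
move=> h.
replace ((q - 1) * (2 * mu * s) * (2 * mu * s - 1) / 2) with
  (2 * (q - 1) * mu * mu * (s * s) - (q - 1) * mu * s) by field.
rewrite h; ring.
Qed.

Section Comb.
Variables (P L : finType) (inc : P -> L -> bool) (q : nat).
Hypothesis hp : projective_plane inc q.
Local Open Scope nat_scope.

Lemma two_lines_card (x y : P) : x != y ->
  #|[set l | inc x l && inc y l]| = 1.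
Proof.
move=> xy; have [l [Hl Hu]] := pp_two_points hp xy.
apply/eqP/cards1P; exists l; apply/setP => l'; rewrite !inE.
apply/idP/eqP => [H|->//]; by rewrite (Hu l' H).
Qed.

Lemma pencil (Q : P) (f : P -> nat) :
  \sum_(x | x != Q) f x = \sum_(l | inc Q l) \sum_(x | (x != Q) && inc x l) f x.
Proof.
under [RHS]eq_bigr do rewrite big_mkcondr.
rewrite (exchange_big). apply: eq_bigr => x xQ.
rewrite -big_mkcondr /= sum_nat_const.
rewrite (_ : #|_| = #|[set l | inc x l && inc Q l]|); last first.
  by apply: eq_card => l; rewrite !inE andbC.
by rewrite two_lines_card // mul1n.
Qed.

Lemma sum_neq (Q : P) (f : P -> nat) : f Q = 0 ->
  \sum_(x | x != Q) f x = \sum_x f x.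
Proof. by move=> fQ; rewrite [RHS](bigD1 Q) //= fQ add0n. Qed.

Lemma sec_full (S : {set P}) (Q : P) :
  secant_count inc S Q = \sum_(l | inc Q l) 'C(line_pts inc S l, 2).
Proof.
rewrite /secant_count [RHS](bigID (fun l => 2 <= line_pts inc S l)) /=.
rewrite [X in _ = _ + X]big1 ?addn0 // => l /andP [_].
by rewrite -ltnNge => /bin_small.
Qed.

Lemma pts_sum (S : {set P}) l :
  line_pts inc S l = \sum_(x | (x \in S) && inc x l) 1.
Proof. by rewrite sum1dep_card. Qed.

Lemma line_sum l : \sum_(x | inc x l) 1 = q.+1.
Proof. by rewrite sum1dep_card (pp_line_size hp). Qed.

Lemma line_sum_neq (Q : P) l : inc Q l -> \sum_(x | (x != Q) && inc x l) 1 = q.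
Proof.
move=> Ql; have := line_sum l; rewrite (bigD1 Q) //=.
move=> /eqP; rewrite eqSS => /eqP <-.
by apply: eq_bigl => x; rewrite andbC.
Qed.

Lemma card_pencil (S : {set P}) (Q : P) : Q \notin S ->
  #|S| = \sum_(l | inc Q l) line_pts inc S l.
Proof.
move=> QS.
rewrite -sum1_card big_mkcond /= -(@sum_neq Q); last by rewrite (negbTE QS).
rewrite pencil; apply: eq_bigr => l Ql.
rewrite pts_sum [RHS]big_mkcond /= [RHS](bigD1 Q) //= (negbTE QS) add0n.
rewrite big_mkcondr /=. apply: eq_bigr => x _.
by case: (x \in S); case: (inc x l).
Qed.

Lemma num_points (Q : P) : #|P| = q.+1 * q + 1.
Proof.
rewrite -sum1_card (bigD1 Q) //= addnC; congr (_ + _).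
rewrite (eq_bigl (fun x => x != Q)) // pencil.
rewrite (eq_bigr (fun _ => q)); last by move=> l Ql; exact: line_sum_neq.
rewrite sum_nat_const; congr (_ * _).
rewrite -(pp_point_deg hp Q); apply: eq_card => l; by rewrite !inE.
Qed.

Lemma pts_le (S : {set P}) (Q : P) l : Q \notin S -> inc Q l ->
  line_pts inc S l <= q.
Proof.
move=> QS Ql; rewrite pts_sum -(line_sum_neq Ql).
rewrite [X in X <= _]big_mkcond [X in _ <= X]big_mkcond /=.
apply: leq_sum => x _. case xS: (x \in S); case: (inc x l) => //=.
by case: eqP xS QS => // -> ->.
Qed.


Lemma pts_mono (S S' : {set P}) l : S \subset S' ->
  line_pts inc S l <= line_pts inc S' l.
Proof.
move=> sub; apply: subset_leq_card; apply/subsetP => x; rewrite !inE.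
by case/andP => /(subsetP sub) -> ->.
Qed.

Lemma sec_mono (S S' : {set P}) Q : S \subset S' ->
  secant_count inc S Q <= secant_count inc S' Q.
Proof.
move=> sub; rewrite !sec_full; apply: leq_sum => l _.
by apply: leq_bin2l; apply: pts_mono.
Qed.

Lemma pts_add (S : {set P}) P0 l : P0 \notin S -> inc P0 l ->
  line_pts inc (P0 |: S) l = (line_pts inc S l).+1.
Proof.
move=> PS Pl; rewrite /line_pts.
rewrite (_ : [set x in P0 |: S | inc x l] = P0 |: [set x in S | inc x l]).
  by rewrite cardsU1 inE (negbTE PS).
by apply/setP => x; rewrite !inE; case: eqP => // ->; rewrite Pl.
Qed.

Lemma sec_inc (S : {set P}) P0 Q l : P0 \notin S -> inc Q l -> inc P0 l ->
  0 < line_pts inc S l ->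
  secant_count inc S Q < secant_count inc (P0 |: S) Q.
Proof.
move=> PS Ql Pl m0; rewrite !sec_full (bigD1 l) // [X in _ < X](bigD1 l) //=.
rewrite pts_add // binS bin1.
have : \sum_(i | inc Q i && (i != l)) 'C(line_pts inc S i, 2) <=
       \sum_(i | inc Q i && (i != l)) 'C(line_pts inc (P0 |: S) i, 2).
  apply: leq_sum => i _; apply: leq_bin2l; apply: pts_mono; exact: subsetUr.
lia.
Qed.

Definition Phi (mu : nat) (S : {set P}) : nat :=
  \sum_(Q | Q \notin S) (mu - secant_count inc S Q).

Definition Res (S : {set P}) (Q P0 : P) : bool :=
  (P0 == Q) || [exists l, [&& inc Q l, inc P0 l & 0 < line_pts inc S l]].

Lemma phi_dec mu (S : {set P}) P0 : P0 \notin S ->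
  Phi mu (P0 |: S) + \sum_(Q | (Q \notin S) && (0 < mu - secant_count inc S Q))
     Res S Q P0 <= Phi mu S.
Proof.
move=> PS; rewrite /Phi big_mkcondr /=.
rewrite (eq_bigl (fun Q => (Q \notin S) && (Q != P0))); last first.
  by move=> x; rewrite !inE negb_or andbC.
rewrite big_mkcondr /= -big_split /=; apply: leq_sum => Q QS.
case: eqP => [->|/eqP QP].
  rewrite /=; case: ltnP => d0 //; case: (Res _ _ _); rewrite /=; lia.
rewrite /=.
have m1 := sec_mono Q (subsetUr [set P0] S).
case: ltnP => [d0|d0]; last by rewrite addn0; lia.
rewrite /Res eq_sym (negbTE QP) /=.
case: existsP => [[l /and3P [Ql Pl m0]]|_]; last by rewrite addn0; lia.
have := sec_inc PS Ql Pl m0; lia.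
Qed.

Lemma line_term m : m <= q ->
  q * m <= (if 0 < m then q - m else 0) + q * 'C(m, 2) + m.
Proof.
case: m => [|k] kq; first by rewrite muln0.
rewrite /=.
have : k <= 'C(k.+1, 2) by rewrite binS bin1 leq_addl.
nia.
Qed.

Lemma res_count (S : {set P}) Q : Q \notin S ->
  1 + q * #|S| <= \sum_(P0 | P0 \notin S) Res S Q P0 + q * secant_count inc S Q + #|S|.
Proof.
move=> QS.
rewrite (bigD1 Q) //= /Res eqxx /= -addnA -addnA leq_add2l.
rewrite (card_pencil QS) sec_full.
have HT : \sum_(l | inc Q l) (if 0 < line_pts inc S l then q - line_pts inc S l else 0)
   <= \sum_(P0 | (P0 \notin S) && (P0 != Q)) Res S Q P0.
  apply: (@leq_trans (\sum_(l | inc Q l) \sum_(x | x != Q)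
            ((x \notin S) && inc x l && (0 < line_pts inc S l) : nat))).
    apply: leq_sum => l Ql; case: ltnP => // m0.
    have E1 : \sum_(i | (i != Q) && inc i l && (i \in S)) 1 = line_pts inc S l.
      rewrite pts_sum; apply: eq_bigl => x.
      case: eqP => [->|]; first by rewrite (negbTE QS) andbF.
      by rewrite andbC.
    have E2 : \sum_(x | x != Q) ((x \notin S) && inc x l && (0 < line_pts inc S l) : nat)
       = \sum_(i | (i != Q) && inc i l && (i \notin S)) 1.
      rewrite [RHS]big_mkcondr /= [RHS]big_mkcondr /=.
      apply: eq_bigr => x _; rewrite m0 andbT andbC.
      by case: (inc x l); case: (x \in S).
    have := line_sum_neq Ql.
    rewrite (bigID (fun x => x \in S)) /= E1 => <-.
    by rewrite addKn -E2 m0.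
  rewrite [X in X <= _](exchange_big) /= [X in _ <= X]big_mkcondl /=.
  apply: leq_sum => x xQ.
  case xS: (x \in S) => /=; first by rewrite big1.
  rewrite /Res (negbTE xQ) /=.
  case: existsP => [_|Hn].
    apply: (@leq_trans (\sum_(l | inc Q l && inc x l) 1)).
      rewrite [X in _ <= X]big_mkcondr /=; apply: leq_sum => l _.
      by case: (inc x l); case: (0 < _).
    by rewrite sum1dep_card (_ : [set l | _] = [set l | inc x l && inc Q l])
      ?two_lines_card //; apply/setP => l; rewrite !inE andbC.
  rewrite big1 // => l Ql; case Hx: (inc x l) => //=.
  case: ltnP => // m0; exfalso; apply: Hn; exists l; by rewrite Ql Hx m0.
apply: (leq_trans _ (leq_add HT (leqnn _))).
rewrite !big_distrr /= -!big_split /=; apply: leq_sum => l Ql.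
rewrite addnA; apply: line_term; exact: pts_le QS Ql.
Qed.


Lemma step mu (S : {set P}) : 0 < Phi mu S -> exists P0, P0 \notin S /\
  Phi mu (P0 |: S) * (mu * #|P|) +
  Phi mu S * ((1 + q * #|S|) - (q * (mu - 1) + #|S|)) <= Phi mu S * (mu * #|P|).
Proof.
move=> Ph.
set r := (1 + q * #|S|) - (q * (mu - 1) + #|S|).
set d := fun Q => mu - secant_count inc S Q.
set D := fun P0 => \sum_(Q | (Q \notin S) && (0 < d Q)) Res S Q P0.
have [Q0 [Q0S dQ0]] : exists Q0, Q0 \notin S /\ 0 < d Q0.
  move: Ph; rewrite /Phi lt0n sum_nat_eq0 => /forallPn [Q0].
  by rewrite negb_imply -lt0n => /andP [] H1 H2; exists Q0.
case: (@arg_maxnP _ Q0 (fun P0 => P0 \notin S) D Q0S) => Ps PsS Hmax.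
exists Ps; split => //.
have Hdec := phi_dec mu PsS.
have H1 : \sum_(P0 | P0 \notin S) D P0 <= #|P| * D Ps.
  apply: (@leq_trans (\sum_(P0 | P0 \notin S) D Ps)); first exact: leq_sum.
  rewrite sum_nat_const leq_mul2r max_card orbT //.
have H2 : \sum_(Q | (Q \notin S) && (0 < d Q)) r <= \sum_(P0 | P0 \notin S) D P0.
  rewrite /D exchange_big /=; apply: leq_sum => Q /andP [QS dQ].
  have := res_count QS; rewrite /d in dQ; rewrite /r.
  have : q * secant_count inc S Q <= q * (mu - 1) by rewrite leq_mul2l; apply/orP; right; lia.
  lia.
have H3 : Phi mu S <= mu * \sum_(Q | (Q \notin S) && (0 < d Q)) 1.
  rewrite /Phi (bigID (fun Q => 0 < d Q)) /= [X in _ + X <= _]big1; last first.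
    by move=> Q /andP [_]; rewrite -leqNgt leqn0 => /eqP.
  rewrite addn0 big_distrr /=; apply: leq_sum => Q _; rewrite muln1 /d; exact: leq_subr.
rewrite sum_nat_const in H2.
have H4 : Phi mu S * r <= mu * #|P| * D Ps.
  apply: (@leq_trans (mu * #|[pred Q | (Q \notin S) && (0 < d Q)]| * r)).
    rewrite leq_mul2r; apply/orP; right.
    by move: H3; rewrite sum1_card.
  rewrite -mulnA -mulnA leq_mul2l; apply/orP; right.
  by apply: leq_trans H2 _.
have Hdec' : Phi mu (Ps |: S) + D Ps <= Phi mu S by exact: Hdec.
have := leq_mul Hdec' (leqnn (mu * #|P|)).
rewrite mulnDl. move: H4. rewrite (mulnC (D Ps)).
move: (Phi mu (Ps |: S) * (mu * #|P|)) (Phi mu S * r) (mu * #|P| * D Ps) (Phi mu S * (mu * #|P|)).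
move=> a b c e; lia.
Qed.


Lemma phi_le mu (S : {set P}) : Phi mu S <= mu * #|P|.
Proof.
rewrite /Phi mulnC -sum_nat_const; apply: (@leq_trans (\sum_(Q | Q \notin S) mu)).
  by apply: leq_sum => Q _; exact: leq_subr.
rewrite [X in _ <= X](bigID (fun Q => Q \notin S)) /=.
by rewrite (eq_bigl (fun Q => Q \notin S)) ?leq_addr // => x; rewrite in_setT.
Qed.

Lemma leftover mu (S : {set P}) :
  exists S' : {set P}, saturating inc mu S' /\ #|S'| <= #|S| + Phi mu S.
Proof.
set X := [set Q | (Q \notin S) && (0 < mu - secant_count inc S Q)].
exists (S :|: X); split.
  move=> Q; rewrite in_setU negb_or => /andP [QS QX].
  apply: (leq_trans _ (sec_mono Q (subsetUl S X))).
  move: QX; rewrite inE QS /= -leqNgt leqn0 subn_eq0 //.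
apply: (leq_trans (leq_card_setU _ _)); rewrite leq_add2l.
rewrite -sum1_card /Phi [X in _ <= X](bigID (fun Q => 0 < mu - secant_count inc S Q)) /=.
apply: leq_trans (leq_addr _ _).
rewrite [X in X <= _](eq_bigl (fun Q => (Q \notin S) && (0 < mu - secant_count inc S Q))); last first.
  by move=> x; rewrite inE.
by apply: leq_sum => Q /andP [].
Qed.

Lemma q_ge2 : 2 <= q.
Proof.
have [a [b [c [d [U Nabc Nabd Nacd Nbcd]]]]] := pp_nondeg hp.
move: U; rewrite /= !inE !negb_or => /andP [/and3P [ab ac ad] /andP [/andP [bc bd] /andP [cd _]]].
have [l1 [/andP [al1 bl1] _]] := pp_two_points hp ab.
have [l2 [/andP [al2 cl2] _]] := pp_two_points hp ac.
have [l3 [/andP [al3 dl3] _]] := pp_two_points hp ad.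
have n12 : l1 != l2.
  apply/eqP => E; move/negP: Nabc; apply; apply/existsP; exists l1.
  by rewrite al1 bl1 E cl2.
have n13 : l1 != l3.
  apply/eqP => E; move/negP: Nabd; apply; apply/existsP; exists l1.
  by rewrite al1 bl1 E dl3.
have n23 : l2 != l3.
  apply/eqP => E; move/negP: Nacd; apply; apply/existsP; exists l2.
  by rewrite al2 cl2 E dl3.
have : #|l3 |: [set l1; l2]| <= #|[set l | inc a l]|.
  apply: subset_leq_card; apply/subsetP => l; rewrite !inE.
  by case: eqP => [->|_] //=; case: eqP => [->|_] //= /eqP ->.
rewrite (pp_point_deg hp) cardsU1 cards2 n12 !inE negb_or.
by rewrite eq_sym n13 eq_sym n23.
Qed.

Lemma some_point : exists Q : P, True.
Proof. by have [a _] := pp_nondeg hp; exists a. Qed.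


Lemma iterA mu j : exists S : {set P}, (#|S| = j \/ Phi mu S = 0) /\ #|S| <= j.
Proof.
elim: j => [|j [S [H1 H2]]]; first by exists set0; rewrite cards0; split; [left|].
case: (posnP (Phi mu S)) => Hp.
  by exists S; split; [right | apply: leq_trans H2 _].
have [P0 [PS _]] := step Hp.
exists (P0 |: S); rewrite cardsU1 PS.
case: H1 => [->|H]; last by rewrite H in Hp.
by split; [left|].
Qed.

Lemma card_pos : (0 < #|P|)%N.
Proof. by have [a _] := pp_nondeg hp; apply/card_gt0P; exists a. Qed.

Local Open Scope R_scope.

Lemma iterB mu k : (1 <= mu)%N -> exists S : {set P},
  (#|S| = (2 * (mu - 1) + k)%N \/ Phi mu S = 0%N) /\ (#|S| <= 2 * (mu - 1) + k)%N /\
  INR (Phi mu S) <= INR (mu * #|P|) *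
     exp (- (INR k + INR (q - 1) * INR k * (INR k - 1) / 2) / INR (mu * #|P|)).
Proof.
move=> mu1.
have Mpos : 0 < INR (mu * #|P|).
  apply: lt_0_INR; apply/ltP; rewrite muln_gt0 mu1; exact: card_pos.
have q2 := q_ge2.
elim: k => [|k [S [H1 [H2 H3]]]].
  have [S [H1 H2]] := iterA mu (2 * (mu - 1)).
  exists S; rewrite addn0; split => //; split => //.
  replace (- (INR 0 + INR (q - 1) * INR 0 * (INR 0 - 1) / 2) / INR (mu * #|P|)) with 0
    by (rewrite (_ : INR 0 = 0) //; field; lra).
  rewrite exp_0 Rmult_1_r; apply: le_INR; apply/leP; exact: phi_le.
set M := INR (mu * #|P|) in Mpos H3 *.
have Hexp : forall x, 0 < exp x := exp_pos.
case: (posnP (Phi mu S)) => Hp.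
  exists S; split; first by right.
  split; first by apply: (leq_trans H2); rewrite addnS.
  rewrite Hp /=; apply: Rlt_le; apply: Rmult_lt_0_compat => //.
have [P0 [PS Hst]] := step Hp.
have HS : #|S| = (2 * (mu - 1) + k)%N by case: H1 => // H; rewrite H in Hp.
exists (P0 |: S); rewrite cardsU1 PS HS addnS; split; first by left.
split => //.
set r := (1 + q * _ - _)%N in Hst.
have Hr : (1 + (q - 1) * k <= r)%N.
  rewrite /r HS.
  have : (2 * (mu - 1) <= q * (mu - 1))%N by rewrite leq_mul2r q2 orbT.
  have : (q * k = (q - 1) * k + k)%N by rewrite mulnBl mul1n subnK // leq_pmull //; lia.
  rewrite mulnDr mulnA (mulnC q 2%N) -mulnA.
  move: (q * (mu - 1))%N (q * k)%N ((q - 1) * k)%N => a b c; lia.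
move/leP: Hst => /le_INR; rewrite !plus_INR !mult_INR => Hst.
move/leP: Hr => /le_INR; rewrite plus_INR mult_INR INR_1 => Hr.
have HM : INR mu * INR #|P| = M by rewrite /M mult_INR.
rewrite HM in Hst.
set ph := INR (Phi mu S) in Hst H3 *.
set ph' := INR (Phi mu (P0 |: S)) in Hst *.
fold M in Hst.
have ph0 : 0 <= ph by apply: pos_INR.
set c := INR (q - 1) in Hr *.
have Ha := exp_ineq1_le (- ((1 + c * INR k) / M)).
have H4 : ph' <= ph * (1 + - ((1 + c * INR k) / M)).
  apply: (Rmult_le_reg_r M) => //.
  rewrite Rmult_assoc Rmult_plus_distr_r Rmult_1_l.
  replace (- ((1 + c * INR k) / M) * M) with (- (1 + c * INR k)) by (field; lra).
  have : ph * (1 + c * INR k) <= ph * INR r by apply: Rmult_le_compat_l.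
  lra.
apply: (Rle_trans _ _ _ H4).
apply: (Rle_trans _ (ph * exp (- ((1 + c * INR k) / M)))).
  by apply: Rmult_le_compat_l.
apply: (Rle_trans _ (M * exp (- (INR k + c * INR k * (INR k - 1) / 2) / M) *
   exp (- ((1 + c * INR k) / M)))).
  apply: Rmult_le_compat_r => //; exact: Rlt_le.
rewrite Rmult_assoc -exp_plus; apply: Req_le; congr (_ * exp _).
rewrite S_INR; field; lra.
Qed.


Lemma core3 mu : (2 <= mu)%N -> (3 <= q)%N -> exists S : {set P},
  saturating inc mu S /\
  INR #|S| <= 2 * INR mu * (sqrt ((INR q + 1) * ln (INR q + 1)) + 1).
Proof.
move=> mu2 q3.
have q2 : (2 <= q)%N by apply: leq_trans q3.
set Lg := ln (INR q + 1).
set s := sqrt ((INR q + 1) * Lg).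
have hL : 1 <= Lg by apply: L_ge1.
have hq3 : 3 <= INR q by (replace 3 with (INR 3) by (simpl; lra); apply/le_INR/leP).
have hmu : 2 <= INR mu by (replace 2 with (INR 2) by (simpl; lra); apply/le_INR/leP).
have hs2 : s * s = (INR q + 1) * Lg by rewrite /s sqrt_sqrt //; nra.
have hs0 : 0 <= s by apply: sqrt_pos.
have hs1 : 1 <= s by nra.
have hsle : s <= (INR q + 1) * Lg by nra.
set x := 2 * INR mu * s.
have hx1 : 1 <= x by rewrite /x; nra.
have [hup1 hup2] := archimed x.
have hz : (0 <= up x)%Z by apply: le_IZR; lra.
set K := Z.to_nat (up x).
have HK : INR K = IZR (up x) by rewrite /K INR_IZR_INZ Znat.Z2Nat.id.
have mu1 : (1 <= mu)%N by apply: leq_trans mu2.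
have [S [H1 [H2 H3]]] := iterB K mu1.
have [Q0 _] := some_point.
have HN : INR #|P| = INR q * INR q + INR q + 1.
  by rewrite (num_points Q0) plus_INR mult_INR S_INR INR_1; ring.
have Hc : INR (q - 1) = INR q - 1 by rewrite minus_INR ?INR_1 //; apply/leP; apply: leq_trans q2.
rewrite Hc mult_INR HN in H3.
set N := INR q * INR q + INR q + 1 in H3 HN.
set M := INR mu * N in H3.
have hN : 0 < N by rewrite /N; nra.
have hM : 0 < M by rewrite /M; nra.
have fK : x + (INR q - 1) * x * (x - 1) / 2 <= INR K + (INR q - 1) * INR K * (INR K - 1) / 2.
  apply: f_mono; lra.
have fx := @fx_eq (INR q) (INR mu) Lg s hs2.
rewrite -/x in fx.
have key := key_ineq hq3 hmu hL hs1 hsle.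
have lnM : ln (M / 2) <= INR mu / 2 - 1 + 2 * Lg.
  replace (M / 2) with ((INR mu / 2) * N) by (rewrite /M; field).
  rewrite ln_mult; [|lra|lra].
  have h1 : ln (INR mu / 2) <= INR mu / 2 - 1 by apply: ln_le_lin; lra.
  have h2 : ln N <= 2 * Lg.
    replace (2 * Lg) with (ln ((INR q + 1) * (INR q + 1))).
      apply: ln_le' => //; rewrite /N; nra.
    rewrite ln_mult; rewrite /Lg; lra.
  lra.
have Hf : M * ln (M / 2) < INR K + (INR q - 1) * INR K * (INR K - 1) / 2.
  apply: (Rle_lt_trans _ (M * (INR mu / 2 - 1 + 2 * Lg))).
    by apply: Rmult_le_compat_l; lra.
  apply: (Rlt_le_trans _ _ _ _ fK); rewrite fx /M.
  replace (INR mu * N * (INR mu / 2 - 1 + 2 * Lg)) with (INR mu * (N * (2 * Lg + INR mu / 2 - 1))) by ring.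
  apply: Rmult_lt_compat_l; [lra | rewrite /N; lra].
have Hph : INR (Phi mu S) < 2.
  apply: (Rle_lt_trans _ _ _ H3).
  have : exp (- (INR K + (INR q - 1) * INR K * (INR K - 1) / 2) / M) < exp (- ln (M / 2)).
    apply: exp_increasing.
    apply: (Rmult_lt_reg_r M) => //.
    replace (- (INR K + (INR q - 1) * INR K * (INR K - 1) / 2) / M * M) with
      (- (INR K + (INR q - 1) * INR K * (INR K - 1) / 2)) by (field; lra).
    lra.
  rewrite exp_Ropp exp_ln; last lra.
  move=> h; apply: (Rlt_le_trans _ (M * / (M / 2))); first by apply: Rmult_lt_compat_l.
  right; field; lra.
have Hph1 : (Phi mu S <= 1)%N.
  have : (Phi mu S < 2)%coq_nat by apply: INR_lt; rewrite (_ : INR 2 = 2) //; simpl; lra.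
  by move/ltP.
have [S' [Hsat HS']] := leftover mu S.
exists S'; split => //.
have Hc' : (#|S'| + 1 <= 2 * mu + K)%N.
  have : (#|S'| <= 2 * (mu - 1) + K + 1)%N.
    apply: (leq_trans HS'); exact: leq_add.
  move: mu2; clearbody K; generalize #|S'| K; intros a b h1 h2; clear -h1 h2; lia.
move/leP: Hc' => /le_INR. rewrite !plus_INR INR_1 (_ : INR 0 = 0) // HK.
have : 2 * INR mu * (s + 1) = x + 2 * INR mu by rewrite /x; ring.
lra.
Qed.

Lemma core mu : (2 <= mu)%N -> exists S : {set P},
  saturating inc mu S /\
  INR #|S| <= 2 * INR mu * (sqrt ((INR q + 1) * ln (INR q + 1)) + 1).
Proof.
move=> mu2.
have q2 := q_ge2.
case: (leqP 3 q) => q3; first exact: core3.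
have qe : q = 2%N by apply/eqP; rewrite eqn_leq q2 -ltnS q3.
exists setT; split; first by move=> Q; rewrite in_setT.
have [Q0 _] := some_point.
rewrite cardsT (num_points Q0) qe.
have hmu : 2 <= INR mu by (replace 2 with (INR 2) by (simpl; lra); apply/le_INR/leP).
have hL : 1 <= ln (INR 2 + 1) by apply: L_ge1.
have h2 : INR 2 = 2 by simpl; lra.
rewrite h2 in hL *.
have hs : 1 <= sqrt ((2 + 1) * ln (2 + 1)).
  apply: (Rle_trans _ (sqrt 1)); first by rewrite sqrt_1; lra.
  apply: sqrt_le_1_alt; nra.
rewrite (_ : INR (3 * 2 + 1) = 7); last by simpl; lra.
nra.
Qed.

End Comb.

Lemma Dseq_lb (q i : nat) : (1 <= i)%N -> (0 < q)%N -> 0 <= delta q ->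
  INR i + (INR i - 1) * delta q <= Dseq q i.
Proof.
move=> i1 q0 d0.
have hq : 0 < INR q by apply: lt_0_INR; apply/ltP.
elim: i i1 => [//|j IH] _.
case: j IH => [|j] IH.
  rewrite /=; lra.
have IH' := IH isT.
rewrite (_ : Dseq q j.+2 = Dseq q j.+1 + 1 + (Dseq q j.+1 + delta q) / INR q + delta q) //.
rewrite S_INR.
have hD : 0 <= Dseq q j.+1.
  apply: Rle_trans IH'; rewrite S_INR; have := pos_INR j; nra.
have : 0 <= (Dseq q j.+1 + delta q) / INR q.
  apply: Rmult_le_pos; [lra | apply: Rlt_le; apply: Rinv_0_lt_compat; lra].
lra.
Qed.

Theorem corollary3 (P L : finType) (inc : P -> L -> bool) (q mu : nat) :
  projective_plane inc q -> (2 <= mu)%N ->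
  (exists S : {set P}, saturating inc mu S /\
     INR #|S| <= 2 * Dseq q mu * sqrt ((INR q + 1) * ln (INR q + 1)) + 2)
  /\
  (INR mu <= sqrt (INR q) ->
   exists S : {set P}, saturating inc mu S /\
     INR #|S| <= 2 * (INR mu + 1) * sqrt ((INR q + 1) * ln (INR q + 1)) + 2)
  /\
  (INR mu <= ((1 - delta q) * INR q - delta q + 1) / 2 + 1 ->
   exists S : {set P}, saturating inc mu S /\
     INR #|S| <= 2 * (2 * INR mu - 1) * sqrt ((INR q + 1) * ln (INR q + 1)) + 2).
Proof.
move=> hp mu2.
have [S [HS HK]] := core hp mu2.
have q2 := q_ge2 hp.
have hL : 1 <= ln (INR q + 1) by apply: L_ge1.
have hq : 2 <= INR q by (replace 2 with (INR 2) by (simpl; lra); apply/le_INR/leP).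
have hmu : 2 <= INR mu by (replace 2 with (INR 2) by (simpl; lra); apply/le_INR/leP).
set s := sqrt ((INR q + 1) * ln (INR q + 1)) in HK *.
have hs2 : s * s = (INR q + 1) * ln (INR q + 1) by rewrite /s sqrt_sqrt //; nra.
have hs0 : 0 <= s by apply: sqrt_pos.
have hs1 : 1 <= s by nra.
have hd : delta q * s = 1 by rewrite /delta -/s; field; lra.
have hd0 : 0 <= delta q.
  rewrite /delta -/s; apply: Rmult_le_pos; [lra | apply: Rlt_le; apply: Rinv_0_lt_compat; lra].
split; last split.
- exists S; split => //.
  have hD := Dseq_lb (i := mu) (ltnW mu2) (ltnW q2) hd0.
  have : (INR mu + (INR mu - 1) * delta q) * s <= Dseq q mu * s.
    by apply: Rmult_le_compat_r.
  have : (INR mu + (INR mu - 1) * delta q) * s = INR mu * s + INR mu - 1.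
    replace ((INR mu + (INR mu - 1) * delta q) * s) with (INR mu * s + (INR mu - 1) * (delta q * s)) by ring.
    rewrite hd; ring.
  nra.
- move=> hm; exists S; split => //.
  have : sqrt (INR q) <= s.
    apply: sqrt_le_1_alt; nra.
  nra.
- move=> _; exists S; split => //; nra.
Qed.
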